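(* Let $\alpha$ be an expanding algebraic number, $\mathcal{D}\subset\mathbb{Z}[\alpha]$ a standard digit set for $\alpha$, and $m\in\mathbb{Z}$ with $\mathcal{D}\subset\alpha^m\mathbb{Z}[\alpha^{-1}]$. Let $x,y\in\Lambda_{\alpha,m}$ and $k\ge0$ with $x-y\in\Lambda_{\alpha,m-k}$. Then $\alpha^{-k}(T_\alpha^{-k}(x)\cap\Lambda_{\alpha,m})-x=\alpha^{-k}(T_\alpha^{-k}(y)\cap\Lambda_{\alpha,m})-y$.
   Context: $\alpha$ is an algebraic number all of whose conjugates have modulus $>1$. $\mathcal{D}$ standard: complete residue system of $\mathbb{Z}[\alpha]/\alpha\mathbb{Z}[\alpha]$. $\Lambda_{\alpha,k}=\mathbb{Z}[\alpha]\cap\alpha^{k-1}\mathbb{Z}[\alpha^{-1}]$. $T_\alpha:\mathbb{Z}[\alpha]\to\mathbb{Z}[\alpha]$, $x\mapsto\alpha^{-1}(x-d)$ with $d\in\mathcal{D}$ the unique digit such that $\alpha^{-1}(x-d)\in\mathbb{Z}[\alpha]$; $T_\alpha^{-k}(x)$ is the preimage set of $x$ under the $k$-th iterate. Sets are subsets of $\mathbb{Q}(\alpha)$, with $\alpha^{-k}S-x=\{\alpha^{-k}s-x:s\in S\}$. *)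

(* Defs.v *)
(* alpha is an algebraic number, realised inside algC
   (the algebraic closure of Q in C); Q(alpha) is a subfield of algC. *)
From HB Require Import structures.
From mathcomp Require Import all_boot all_order all_algebra all_field.
Set Implicit Arguments. Unset Strict Implicit. Unset Printing Implicit Defensive.
Import Order.TTheory GRing.Theory Num.Theory.
Local Open Scope ring_scope.

Definition algebraic (a : algC) : Prop :=
  exists2 p : {poly rat}, p != 0 & root (map_poly ratr p) a.

(* b is a conjugate of a: b is a root of the minimal polynomial of a, i.e.
   b is a root of every rational polynomial vanishing at a. *)
Definition conjugate (a b : algC) : Prop :=
  forall p : {poly rat}, root (map_poly ratr p) a -> root (map_poly ratr p) b.

Definition expanding (a : algC) : Prop :=
  algebraic a /\ forall b, conjugate a b -> 1 < `|b|.

Definition Zadj (a : algC) (z : algC) : Prop :=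
  exists p : {poly int}, z = (map_poly (fun n : int => n%:~R) p).[a].

Definition powZinv (a : algC) (j : int) (z : algC) : Prop :=
  exists2 w, Zadj a^-1 w & z = a ^ j * w.

(* Lambda_{a,k} = Z[a] ∩ a^{k-1} Z[a^{-1}] *)
Definition Lam (a : algC) (k : int) (z : algC) : Prop :=
  Zadj a z /\ powZinv a (k - 1) z.

(* D is a standard digit set: a complete residue system of Z[a]/aZ[a] *)
Definition standard_digits (a : algC) (D : algC -> Prop) : Prop :=
  (forall d, D d -> Zadj a d) /\
  (forall d1 d2, D d1 -> D d2 -> Zadj a ((d1 - d2) / a) -> d1 = d2) /\
  (forall x, Zadj a x -> exists2 d, D d & Zadj a ((x - d) / a)).

(* graph of T_a : x |-> a^{-1}(x - d), d the unique digit with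
   a^{-1}(x-d) in Z[a] (unique by standard_digits) *)
Definition Tstep (a : algC) (D : algC -> Prop) (x y : algC) : Prop :=
  Zadj a x /\ exists2 d, D d & (Zadj a ((x - d) / a) /\ y = (x - d) / a).

Fixpoint Titer (a : algC) (D : algC -> Prop) (k : nat) (x y : algC) : Prop :=
  match k with
  | 0 => Zadj a x /\ y = x
  | k'.+1 => exists2 z, Tstep a D x z & Titer a D k' z y
  end.

Definition Tpre (a : algC) (D : algC -> Prop) (k : nat) (x : algC) (z : algC)
  : Prop := Titer a D k z x.

Definition shifted_pre (a : algC) (D : algC -> Prop) (m : int) (k : nat)
  (x : algC) (w : algC) : Prop :=
  exists2 s, Tpre a D k x s /\ Lam a m s & w = a ^- k * s - x.

(* Main.v *)
Require Import Defs.
From mathcomp Require Import all_boot all_order all_algebra all_field.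
Import Order.TTheory GRing.Theory Num.Theory.
Set Implicit Arguments.
Local Open Scope ring_scope.
From mathcomp Require Import ring.

Lemma ZB a u v : Zadj a u -> Zadj a v -> Zadj a (u - v).
Proof. move=> [p ->] [q ->]; exists (p - q). by rewrite rmorphB hornerD hornerN. Qed.
Lemma ZM a u v : Zadj a u -> Zadj a v -> Zadj a (u * v).
Proof. move=> [p ->] [q ->]; exists (p * q). by rewrite rmorphM hornerM. Qed.
Lemma ZX a n : Zadj a (a ^+ n).
Proof. exists 'X^n. by rewrite map_polyXn hornerXn. Qed.
Lemma Z0 a : Zadj a 0.
Proof. by have := ZB (ZX a 0) (ZX a 0); rewrite subrr. Qed.
Lemma ZN a u : Zadj a u -> Zadj a (- u).
Proof. by move=> H; have := ZB (Z0 a) H; rewrite sub0r. Qed.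
Lemma ZD a u v : Zadj a u -> Zadj a v -> Zadj a (u + v).
Proof. by move=> Hu /ZN Hv; have := ZB Hu Hv; rewrite opprK. Qed.

Lemma LamN a j u : Lam a j u -> Lam a j (- u).
Proof.
move=> [Hz [w Hw Eu]]; split; first exact: ZN.
by exists (- w); [exact: ZN | rewrite Eu mulrN].
Qed.

Lemma Titer_shift a D k : forall s x y, a != 0 -> Zadj a x -> Zadj a y ->
  Titer a D k s x -> Titer a D k (s - a ^+ k * (x - y)) y.
Proof.
elim: k => [|k IH] s x y a0 Hx Hy /=.
  by move=> [_ ->]; split => //; rewrite expr0 mul1r opprB addrC subrK.
move=> [z [Hs [d Dd [Hz ->]]] Ht].
exists ((s - d) / a - a ^+ k * (x - y)); last exact: IH.
split.
  apply: ZB => //; apply: ZM; [exact: ZX | exact: ZB].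
have E : (s - a ^+ k.+1 * (x - y) - d) / a = (s - d) / a - a ^+ k * (x - y).
  by rewrite exprS; field.
exists d => //; rewrite E; split => //.
apply: ZB => //; apply: ZM; [exact: ZX | exact: ZB].
Qed.

Lemma dir a D m k x y : a != 0 ->
  Lam a m x -> Lam a m y -> Lam a (m - k%:Z) (x - y) ->
  forall w, shifted_pre a D m k x w -> shifted_pre a D m k y w.
Proof.
move=> a0 [Hx _] [Hy _] [_ [v Hv Ev]] w [s [Ht [Hs [u Hu Eu]]] ->].
exists (s - a ^+ k * (x - y)).
  split; first exact: Titer_shift.
  split; first by apply: ZB => //; apply: ZM; [exact: ZX | exact: ZB].
  exists (u - v); first exact: ZB.
  rewrite Eu Ev mulrA -[a ^+ k]/(a ^ (k%:Z)) -expfzDr //.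
  have -> : (k%:Z + (m - k%:Z - 1) = m - 1)%R by ring.
  by rewrite mulrBr.
rewrite mulrBr mulrA mulVf ?expf_neq0 // mul1r; ring.
Qed.

Theorem lemma6p12 (alpha : algC) (D : algC -> Prop) (m : int)
  (x y : algC) (k : nat) :
  expanding alpha ->
  standard_digits alpha D ->
  (forall d, D d -> powZinv alpha m d) ->
  Lam alpha m x -> Lam alpha m y ->
  Lam alpha (m - k%:Z) (x - y) ->
  forall w, shifted_pre alpha D m k x w <-> shifted_pre alpha D m k y w.
Proof.
move=> [_ Hexp] _ _ Hx Hy Hxy w.
have a0 : alpha != 0.
  apply/eqP => a0; have := Hexp alpha (fun p h => h).
  by rewrite a0 normr0 ltr10.
split; first exact: dir.
apply: dir => //; rewrite -[y - x]opprB; exact: (LamN Hxy).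
Qed.
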